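(* For $a\in\mathbb{Q}$, $a>0$, let $\mathcal{R}_a$ be the rectangle with vertices $(0,0)$, $(0,1)$, $(a,0)$, $(a,1)$. Then the set of positive $a\in\mathbb{Q}$ for which there are infinitely many points $(x,y)\in\mathbb{Q}^2$ with $0<x<a$ and $0<y<1$ whose distances to each of the four vertices of $\mathcal{R}_a$ are rational is dense in $\mathbb{R}_{+}=(0,\infty)$.
   Context: No further context is needed. *)

(* Defs.v *)
From Stdlib Require Import Reals QArith Qreals List.
Open Scope R_scope.

Definition IsRat (x : R) : Prop := exists q : Q, x = Q2R q.

Definition dist2 (p q : R * R) : R :=
  sqrt ((fst p - fst q) ^ 2 + (snd p - snd q) ^ 2).

Definition good_point (a : R) (p : R * R) : Prop :=
  IsRat (fst p) /\ IsRat (snd p) /\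
  0 < fst p < a /\ 0 < snd p < 1 /\
  IsRat (dist2 p (0, 0)) /\ IsRat (dist2 p (0, 1)) /\
  IsRat (dist2 p (a, 0)) /\ IsRat (dist2 p (a, 1)).

Definition infinite_set (P : R * R -> Prop) : Prop :=
  forall l : list (R * R), exists p, P p /\ ~ In p l.

Definition S_good (a : R) : Prop :=
  IsRat a /\ 0 < a /\ infinite_set (good_point a).

(* Main.v *)
Require Import Defs.
From Stdlib Require Import Reals QArith Qreals List.
From Stdlib Require Import Lra Lia Psatz ZArith Classical.
Open Scope R_scope.

Lemma IsRat_IZR (z : Z) : IsRat (IZR z).
Proof. exists (inject_Z z). unfold Q2R, inject_Z. simpl. field. Qed.

Lemma IsRat_plus x y : IsRat x -> IsRat y -> IsRat (x + y).
Proof. intros [a ->] [b ->]. exists (a + b)%Q. now rewrite Q2R_plus. Qed.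
Lemma IsRat_mult x y : IsRat x -> IsRat y -> IsRat (x * y).
Proof. intros [a ->] [b ->]. exists (a * b)%Q. now rewrite Q2R_mult. Qed.
Lemma IsRat_opp x : IsRat x -> IsRat (- x).
Proof. intros [a ->]. exists (- a)%Q. now rewrite Q2R_opp. Qed.
Lemma IsRat_minus x y : IsRat x -> IsRat y -> IsRat (x - y).
Proof. intros. unfold Rminus. apply IsRat_plus; auto. now apply IsRat_opp. Qed.
Lemma IsRat_inv x : IsRat x -> IsRat (/ x).
Proof.
  intros [a ->]. destruct (Qeq_dec a 0) as [H|H].
  - exists 0%Q. rewrite (Qeq_eqR _ _ H). unfold Q2R. simpl.
    rewrite Rmult_0_l, Rinv_0. reflexivity.
  - exists (/ a)%Q. now rewrite Q2R_inv.
Qed.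
Lemma IsRat_div x y : IsRat x -> IsRat y -> IsRat (x / y).
Proof. intros. unfold Rdiv. apply IsRat_mult; auto. now apply IsRat_inv. Qed.
Lemma IsRat_Rabs x : IsRat x -> IsRat (Rabs x).
Proof. intros H. unfold Rabs. destruct (Rcase_abs x); auto. now apply IsRat_opp. Qed.
Lemma IsRat_pow x n : IsRat x -> IsRat (x ^ n).
Proof. intros H. induction n; simpl. apply (IsRat_IZR 1). now apply IsRat_mult. Qed.

Definition Vv (x : R) (e : Z) : Prop :=
  exists a b : Z, Z.odd a = true /\ Z.odd b = true /\ x = IZR a / IZR b * powerRZ 2 e.
Definition Iv (x : R) (e : Z) : Prop :=
  exists a b : Z, Z.odd b = true /\ x = IZR a / IZR b * powerRZ 2 e.

Lemma odd_neq0 (a : Z) : Z.odd a = true -> IZR a <> 0.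
Proof. intros H H0. apply eq_IZR_R0 in H0. subst. discriminate. Qed.

Lemma powerRZ2_pos e : 0 < powerRZ 2 e.
Proof. apply powerRZ_lt. lra. Qed.

Lemma powerRZ2_IZR (k : Z) : (0 <= k)%Z -> powerRZ 2 k = IZR (2 ^ k).
Proof.
  intros Hk. rewrite <- (Z2Nat.id k Hk). rewrite <- pow_powerRZ.
  rewrite pow_IZR. reflexivity.
Qed.

Lemma Vv_neq0 x e : Vv x e -> x <> 0.
Proof.
  intros (a & b & Ha & Hb & ->).
  pose proof (odd_neq0 a Ha). pose proof (odd_neq0 b Hb). pose proof (powerRZ2_pos e).
  apply Rmult_integral_contrapositive_currified; [|lra].
  unfold Rdiv. apply Rmult_integral_contrapositive_currified; auto.
  now apply Rinv_neq_0_compat.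
Qed.

Lemma Vv_unique_lt x e f : Vv x e -> Vv x f -> (e < f)%Z -> False.
Proof.
  intros (a & b & Ha & Hb & Ex) (c & d & Hc & Hd & Ey) Hlt.
  rewrite Ex in Ey.
  pose proof (odd_neq0 b Hb). pose proof (odd_neq0 d Hd).
  assert (Hp : powerRZ 2 f = powerRZ 2 e * powerRZ 2 (f - e)).
  { rewrite <- powerRZ_add by lra. f_equal. lia. }
  rewrite Hp in Ey.
  pose proof (powerRZ2_pos e).
  rewrite (powerRZ2_IZR (f - e)) in Ey by lia.
  set (P := IZR (2 ^ (f - e))) in *.
  assert (E2 : IZR (a * d) = IZR (c * b * 2 ^ (f - e))).
  { rewrite !mult_IZR. fold P.
    apply (Rmult_eq_reg_r (powerRZ 2 e / (IZR b * IZR d))).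
    - replace (IZR a * IZR d * (powerRZ 2 e / (IZR b * IZR d))) with (IZR a / IZR b * powerRZ 2 e) by (field; auto).
      rewrite Ey. field; auto.
    - apply Rmult_integral_contrapositive_currified; [lra|].
      apply Rinv_neq_0_compat. apply Rmult_integral_contrapositive_currified; auto. }
  apply eq_IZR in E2.
  assert (Z.odd (a * d) = true) by (rewrite Z.odd_mul, Ha, Hd; reflexivity).
  assert (Z.odd (c * b * 2 ^ (f - e)) = false).
  { rewrite Z.odd_mul. rewrite Z.odd_pow by lia. simpl. now rewrite Bool.andb_false_r. }
  congruence.
Qed.

Lemma Vv_unique x e f : Vv x e -> Vv x f -> e = f.
Proof.
  intros H1 H2. destruct (Z.lt_trichotomy e f) as [H|[H|H]]; auto.
  - exfalso. now apply (Vv_unique_lt x e f).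
  - exfalso. now apply (Vv_unique_lt x f e).
Qed.

Lemma Zodd_mul_true a b : Z.odd a = true -> Z.odd b = true -> Z.odd (a*b) = true.
Proof. intros. rewrite Z.odd_mul. now rewrite H, H0. Qed.

Ltac nz := repeat match goal with
  | H : Z.odd ?a = true |- context [IZR ?a] => pose proof (odd_neq0 a H); clear H
  end.

Lemma Vv_mul x y e f : Vv x e -> Vv y f -> Vv (x * y) (e + f).
Proof.
  intros (a & b & Ha & Hb & ->) (c & d & Hc & Hd & ->).
  exists (a*c)%Z, (b*d)%Z. repeat split; try now apply Zodd_mul_true.
  rewrite powerRZ_add by lra. rewrite !mult_IZR.
  pose proof (odd_neq0 b Hb). pose proof (odd_neq0 d Hd). field. auto.
Qed.

Lemma Vv_inv x e : Vv x e -> Vv (/ x) (- e).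
Proof.
  intros (a & b & Ha & Hb & ->).
  exists b, a. repeat split; auto.
  pose proof (odd_neq0 b Hb). pose proof (odd_neq0 a Ha). pose proof (powerRZ2_pos e).
  rewrite powerRZ_neg'. field. repeat split; lra || auto.
Qed.

Lemma Vv_div x y e f : Vv x e -> Vv y f -> Vv (x / y) (e - f).
Proof. intros. unfold Rdiv. replace (e - f)%Z with (e + - f)%Z by lia.
  apply Vv_mul; auto. now apply Vv_inv. Qed.

Lemma Vv_opp x e : Vv x e -> Vv (- x) e.
Proof.
  intros (a & b & Ha & Hb & ->). exists (- a)%Z, b. repeat split; auto.
  - now rewrite Z.odd_opp.
  - rewrite opp_IZR. pose proof (odd_neq0 b Hb). field. auto.
Qed.

Lemma Vv_Iv x e : Vv x e -> Iv x e.
Proof. intros (a & b & Ha & Hb & ->). exists a, b. auto. Qed.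

Lemma Iv_weaken x e e' : Iv x e -> (e' <= e)%Z -> Iv x e'.
Proof.
  intros (a & b & Hb & ->) Hle. exists (a * 2 ^ (e - e'))%Z, b. split; auto.
  rewrite mult_IZR. rewrite <- powerRZ2_IZR by lia.
  replace (powerRZ 2 e) with (powerRZ 2 (e - e') * powerRZ 2 e').
  2:{ rewrite <- powerRZ_add by lra. f_equal. lia. }
  pose proof (odd_neq0 b Hb). field. auto.
Qed.

Lemma Iv_add x y e : Iv x e -> Iv y e -> Iv (x + y) e.
Proof.
  intros (a & b & Hb & ->) (c & d & Hd & ->). exists (a*d + c*b)%Z, (b*d)%Z.
  split; [now apply Zodd_mul_true|].
  rewrite plus_IZR, !mult_IZR.
  pose proof (odd_neq0 b Hb). pose proof (odd_neq0 d Hd). field. auto.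
Qed.

Lemma Iv_mul x y e f : Iv x e -> Iv y f -> Iv (x * y) (e + f).
Proof.
  intros (a & b & Hb & ->) (c & d & Hd & ->). exists (a*c)%Z, (b*d)%Z.
  split; [now apply Zodd_mul_true|].
  rewrite powerRZ_add by lra. rewrite !mult_IZR.
  pose proof (odd_neq0 b Hb). pose proof (odd_neq0 d Hd). field. auto.
Qed.

Lemma Iv_opp x e : Iv x e -> Iv (- x) e.
Proof.
  intros (a & b & Hb & ->). exists (- a)%Z, b. split; auto.
  rewrite opp_IZR. pose proof (odd_neq0 b Hb). field. auto.
Qed.

Lemma Iv_IZR z : Iv (IZR z) 0.
Proof. exists z, 1%Z. split; auto. simpl. field. Qed.

Lemma Vv_add_Iv x y e f : Vv x e -> Iv y f -> (e < f)%Z -> Vv (x + y) e.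
Proof.
  intros (a & b & Ha & Hb & ->) (c & d & Hd & ->) Hlt.
  exists (a*d + c*b*2^(f-e))%Z, (b*d)%Z. repeat split.
  - rewrite Z.odd_add, Z.odd_mul, Ha, Hd. rewrite !Z.odd_mul. rewrite Z.odd_pow by lia.
    simpl. now rewrite Bool.andb_false_r.
  - now apply Zodd_mul_true.
  - rewrite plus_IZR, !mult_IZR. rewrite <- powerRZ2_IZR by lia.
    replace (powerRZ 2 f) with (powerRZ 2 (f - e) * powerRZ 2 e).
    2:{ rewrite <- powerRZ_add by lra. f_equal. lia. }
    pose proof (odd_neq0 b Hb). pose proof (odd_neq0 d Hd). field. auto.
Qed.

Lemma Vv_frac a b : Z.odd a = true -> Z.odd b = true -> Vv (IZR a / IZR b) 0.
Proof. intros. exists a, b. repeat split; auto. simpl. ring. Qed.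

Lemma Vv_pow2 e : Vv (powerRZ 2 e) e.
Proof. exists 1%Z, 1%Z. repeat split; auto. simpl. field. Qed.

Lemma Vv_sq x e : Vv x e -> Vv (x * x) (2 * e).
Proof. intros H. replace (2*e)%Z with (e+e)%Z by lia. now apply Vv_mul. Qed.

Definition F3 (A Q : R) := Q*Q*Q + A*Q*Q + Q.
Definition lam A Q w := (3*Q*Q + 2*A*Q + 1)/(2*w).
Definition dblQ A Q w := lam A Q w * lam A Q w - A - 2*Q.
Definition dblw A Q w := lam A Q w * (Q - dblQ A Q w) - w.

Lemma F3_nz A Q w : w*w = F3 A Q -> w <> 0 -> F3 A Q <> 0.
Proof. intros H Hw. rewrite <- H. now apply Rmult_integral_contrapositive_currified. Qed.

Lemma dblQ_eq A Q w : w*w = F3 A Q -> w <> 0 -> dblQ A Q w = (Q*Q-1)^2/(4*F3 A Q).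
Proof.
  intros H Hw. pose proof (F3_nz _ _ _ H Hw) as HF.
  unfold dblQ.
  replace (lam A Q w * lam A Q w) with ((3*Q*Q + 2*A*Q + 1)^2/(4*(w*w)))
    by (unfold lam; field; auto).
  rewrite H. unfold F3 in *. field. auto.
Qed.

Lemma dbl_curve A Q w : w*w = F3 A Q -> w <> 0 ->
  dblw A Q w * dblw A Q w = F3 A (dblQ A Q w).
Proof.
  intros H Hw. pose proof (F3_nz _ _ _ H Hw) as HF.
  pose proof (dblQ_eq A Q w H Hw) as HQ.
  unfold dblw. rewrite HQ.
  set (l := lam A Q w).
  set (Q' := (Q*Q-1)^2/(4*F3 A Q)).
  assert (Hl2 : l*l = (3*Q*Q + 2*A*Q + 1)^2/(4*F3 A Q))
    by (unfold l, lam; rewrite <- H; field; auto).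
  assert (Hlw : l*w = (3*Q*Q + 2*A*Q + 1)/2) by (unfold l, lam; field; auto).
  replace ((l * (Q - Q') - w) * (l * (Q - Q') - w)) with
    ((l*l)*(Q-Q')^2 - 2*(l*w)*(Q-Q') + w*w) by ring.
  rewrite Hl2, Hlw, H. unfold Q'. unfold F3 in *. field. auto.
Qed.

Lemma tr_curve A Q w : w*w = F3 A Q -> Q <> 0 ->
  (-w/(Q*Q))*(-w/(Q*Q)) = F3 A (/Q).
Proof.
  intros H HQ. replace ((-w/(Q*Q))*(-w/(Q*Q))) with ((w*w)/(Q*Q*Q*Q)) by (field; auto).
  rewrite H. unfold F3. field. auto.
Qed.

Definition hQ A Q := (Q*Q + A*Q + 1)*((Q-1)*(Q-1))/(4*Q*((Q+1)*(Q+1))).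
Definition Yv Q w := - w*(Q-1)/(2*Q*(Q+1)).

Lemma Yv_sq A Q w : w*w = F3 A Q -> 0 < Q -> Yv Q w * Yv Q w = hQ A Q.
Proof.
  intros H HQ. unfold Yv, hQ.
  replace (- w * (Q - 1) / (2 * Q * (Q + 1)) * (- w * (Q - 1) / (2 * Q * (Q + 1))))
    with ((w*w) * (Q-1)*(Q-1) / (4*Q*Q*(Q+1)*(Q+1))) by (field; lra).
  rewrite H. unfold F3. field. lra.
Qed.
Lemma lt_div_r (a b d : R) : 0 < d -> a*d < b -> a < b/d.
Proof. intros Hd H. replace a with ((a*d)/d) by (field; lra).
  unfold Rdiv. apply Rmult_lt_compat_r; [apply Rinv_0_lt_compat; lra|lra]. Qed.
Lemma lt_div_l (a b d : R) : 0 < d -> b < a*d -> b/d < a.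
Proof. intros Hd H. replace a with ((a*d)/d) by (field; lra).
  unfold Rdiv. apply Rmult_lt_compat_r; [apply Rinv_0_lt_compat; lra|lra]. Qed.

Lemma core_z (c z : R) : 2 <= c -> 0 <= z -> 4 + 4*c^2 <= z^2 ->
  c^2*z^2 - (8*c^2+16)*z - (4*c^4+20*c^2+32) <= 0 ->
  ((z^2-4)/(4*(z+(2+c^2))) + /((z^2-4)/(4*(z+(2+c^2)))))^2 < 4 + 4*c^2.
Proof.
  intros Hc Hz H1 H2.
  set (q := (z^2-4)/(4*(z+(2+c^2)))).
  set (S := sqrt (1 + c^2)).
  assert (HS2 : S*S = 1 + c^2) by (apply sqrt_sqrt; nra).
  assert (HS0 : 0 < S) by (apply sqrt_lt_R0; nra).
  assert (HSc : c < S) by nra.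
  assert (HzS : 2*S <= z) by nra.
  assert (HA : 0 < z + (2+c^2)) by nra.
  assert (Hu : 0 < z^2 - 4) by nra.
  assert (Hq : 0 < q) by (unfold q; apply Rdiv_lt_0_compat; lra).
  assert (L1 : S - c < q).
  { unfold q. apply lt_div_r; [lra|].
    assert (Hsc1 : (S - c)*(S+c) = 1) by nra.
    assert (Hd0 : 0 < S - c) by nra.
    assert (Hsmall : S - c <= 1/4).
    { assert (S + c >= 4) by nra. nra. }
    assert (Hbase : (S - c)*(S+1)^2 < S^2 - 1).
    { assert (HH: (S-1)*(S+c) > S + 1) by nra.
      assert (E1: (S - c)*(S+1)^2 = (S+1)^2 * (S-c)) by ring.
      assert (E2: (S+1)^2 * (S-c) * (S+c) = (S+1)^2) by (rewrite Rmult_assoc, Hsc1; ring).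
      nra. }
    set (e := z - 2*S).
    assert (He : 0 <= e) by (unfold e; lra).
    replace z with (2*S + e) by (unfold e; ring).
    replace (c^2) with (S*S - 1) by lra.
    nra. }
  assert (L2 : q < S + c).
  { unfold q. apply lt_div_l; [lra|].
    assert (Hc2 : 0 < c^2) by nra.
    assert (K1 : c^2*(z^2-4) <= (8*c^2+16)*z + 4*c^4+16*c^2+32) by nra.
    assert (K2 : (8*c^2+16)*z + 4*c^4+16*c^2+32 < 4*c^2*(2*c)*(z+(2+c^2))).
    { assert (8*c^2+16 <= 8*c^3) by nra.
      assert (4*c^4+16*c^2+32 < 8*c^3*(2+c^2)) by nra.
      nra. }
    assert (K3 : 4*c^2*(2*c)*(z+(2+c^2)) <= 4*c^2*(S+c)*(z+(2+c^2))).
    { apply Rmult_le_compat_r; [lra|]. apply Rmult_le_compat_l; nra. }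
    assert (c^2*(z^2-4) < c^2*((S+c)*(4*(z+(2+c^2))))) by nra.
    apply Rmult_lt_reg_l with (c^2); lra. }
  assert (Hqq : q*q - 2*S*q + 1 < 0) by nra.
  assert (E : q + /q = (q*q+1)/q) by (field; lra).
  rewrite E.
  assert (0 < q*q+1) by nra.
  assert ((q*q+1)/q < 2*S).
  { apply lt_div_l; [lra|]. nra. }
  assert (0 < (q*q+1)/q) by (apply Rdiv_lt_0_compat; lra).
  nra.
Qed.

Lemma plus_inv_ge2 Q : 0 < Q -> 2 <= Q + /Q.
Proof. intros HQ. assert (E : Q + /Q - 2 = (Q-1)^2/Q) by (field; lra).
  assert (0 <= (Q-1)^2/Q) by (unfold Rdiv; apply Rmult_le_pos; [apply pow2_ge_0| left; apply Rinv_0_lt_compat; lra]). lra. Qed.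

Lemma hQ_z A Q : 0 < Q -> hQ A Q = (Q + /Q + A)*(Q + /Q - 2)/(4*(Q + /Q + 2)).
Proof. intros HQ. unfold hQ. field. repeat split; nra. Qed.

Lemma real_step c Q : 2 <= c -> 0 < Q ->
  c*c/4 <= hQ (2+c*c) Q -> hQ (2+c*c) Q <= (c/2+2/c)^2 ->
  hQ (2+c*c) ((Q*Q-1)^2/(4*F3 (2+c*c) Q)) < c*c/4.
Proof.
  intros Hc HQ H1 H2.
  set (A := 2 + c*c) in *.
  rewrite hQ_z in H1, H2 by auto.
  set (z := Q + /Q) in *.
  assert (Hz : 2 <= z).
  { unfold z. now apply plus_inv_ge2. }
  assert (Hz2 : 0 < z + 2) by lra.
  assert (HA : 0 < z + A) by (unfold A; nra).
  assert (Z1 : 4 + 4*c^2 <= z^2).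
  { assert (c*c/4 * (4*(z+2)) <= (z+A)*(z-2)).
    { apply Rmult_le_reg_r with (/(4*(z+2))). apply Rinv_0_lt_compat; lra.
      replace ((z + A) * (z - 2) * / (4 * (z + 2))) with ((z + A) * (z - 2) / (4 * (z + 2))) by reflexivity.
      replace (c * c / 4 * (4 * (z + 2)) * / (4 * (z + 2))) with (c*c/4) by (field; lra). lra. }
    unfold A in *. nra. }
  assert (Z2 : c^2*z^2 - (8*c^2+16)*z - (4*c^4+20*c^2+32) <= 0).
  { assert ((z+A)*(z-2) <= (c/2+2/c)^2 * (4*(z+2))).
    { apply Rmult_le_reg_r with (/(4*(z+2))). apply Rinv_0_lt_compat; lra.
      replace ((c/2+2/c)^2 * (4 * (z + 2)) * / (4 * (z + 2))) with ((c/2+2/c)^2) by (field; lra).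
      exact H2. }
    assert (E : (c/2+2/c)^2 * (4*(z+2)) = (c*c+4)^2*(z+2)/(c*c)) by (field; lra).
    rewrite E in H.
    assert (c*c*((z+A)*(z-2)) <= (c*c+4)^2*(z+2)).
    { apply Rmult_le_reg_r with (/(c*c)). apply Rinv_0_lt_compat; nra.
      replace (c * c * ((z + A) * (z - 2)) * / (c * c)) with ((z + A) * (z - 2)) by (field; lra).
      exact H. }
    unfold A in *. nra. }
  assert (HQ' : (Q*Q-1)^2/(4*F3 A Q) = (z^2-4)/(4*(z+A))).
  { assert (E1 : Q*Q + A*Q + 1 = Q*(z + A)) by (unfold z; field; lra).
    assert (0 < Q*Q + A*Q + 1) by (rewrite E1; nra).
    unfold z, F3. field. repeat split; nra. }
  rewrite HQ'.
  set (q := (z^2-4)/(4*(z+A))).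
  assert (Hq : 0 < q).
  { unfold q. apply Rdiv_lt_0_compat; [nra|lra]. }
  rewrite hQ_z by auto.
  pose proof (core_z c z Hc ltac:(lra) Z1 Z2) as Hcore.
  replace (2 + c^2) with A in Hcore by (unfold A; ring). fold q in Hcore.
  set (z' := q + /q) in *.
  assert (Hz' : 2 <= z').
  { unfold z'. now apply plus_inv_ge2. }
  apply lt_div_l; [lra|].
  assert (E : c * c / 4 * (4 * (z' + 2)) - (z' + A) * (z' - 2) = 4 + 4*c^2 - z'^2)
    by (unfold A; field).
  lra.
Qed.

Definition ext c g Q w :=
  if Rlt_dec (hQ (2+c*c) Q) (c*c/4) then c/2 + Yv Q w else c/2 + g*g / Yv Q w.

Definition goodQ c Q := hQ (2+c*c) Q < c*c/4 \/ (c/2+2/c)^2 < hQ (2+c*c) Q.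

Definition GoodX c X := IsRat X /\ 0 < X < c /\
  (exists G1, IsRat G1 /\ X^2 + 1 = G1^2) /\ (exists G2, IsRat G2 /\ (c - X)^2 + 1 = G2^2).

Lemma sq_id1 c Q w : w*w = F3 (2+c*c) Q -> 0 < Q ->
  (c/2 + Yv Q w)^2 + 1 = ((c*Q*(Q-1) - w*(Q+1))/(2*Q*(Q+1)))^2.
Proof.
  intros H HQ.
  assert (E : (c/2 + Yv Q w)^2 + 1 - ((c*Q*(Q-1) - w*(Q+1))/(2*Q*(Q+1)))^2
             = (F3 (2+c*c) Q - w*w)/(Q*(Q+1)^2)).
  { unfold Yv, F3. field. lra. }
  rewrite H in E. replace ((F3 (2 + c * c) Q - F3 (2 + c * c) Q) / (Q * (Q + 1) ^ 2)) with 0 in E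
    by (field; lra). lra.
Qed.

Lemma sq_id2 c Q w : w*w = F3 (2+c*c) Q -> 0 < Q ->
  (c/2 - Yv Q w)^2 + 1 = ((c*Q*(Q-1) + w*(Q+1))/(2*Q*(Q+1)))^2.
Proof.
  intros H HQ.
  assert (E : (c/2 - Yv Q w)^2 + 1 - ((c*Q*(Q-1) + w*(Q+1))/(2*Q*(Q+1)))^2
             = (F3 (2+c*c) Q - w*w)/(Q*(Q+1)^2)).
  { unfold Yv, F3. field. lra. }
  rewrite H in E. replace ((F3 (2 + c * c) Q - F3 (2 + c * c) Q) / (Q * (Q + 1) ^ 2)) with 0 in E
    by (field; lra). lra.
Qed.

Lemma inv_id c g Y s G : c*c/4 + 1 = g*g -> Y <> 0 ->
  (c/2 + s*Y)^2 + 1 = G^2 -> (c/2 + s*(g*g)/Y)^2 + 1 = (g*G/Y)^2 \/ s*s <> 1.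
Proof.
  intros Hg HY H. destruct (Req_dec (s*s) 1) as [Hs|Hs]; [left|right; auto].
  replace ((g*G/Y)^2) with ((g*g)*G^2/(Y*Y)) by (field; auto).
  rewrite <- H. rewrite <- Hg.
  field_simplify; auto.
  replace (s^2) with 1 by (rewrite <- Hs; ring).
  field; auto.
Qed.

Lemma ext_spec c g Q w : 2 <= c -> c*c/4 + 1 = g*g -> w*w = F3 (2+c*c) Q -> 0 < Q ->
  IsRat c -> IsRat g -> IsRat Q -> IsRat w -> goodQ c Q ->
  GoodX c (ext c g Q w) /\
  ((ext c g Q w - c/2)*(ext c g Q w - c/2) = hQ (2+c*c) Q \/
   (ext c g Q w - c/2)*(ext c g Q w - c/2) = (g*g)*(g*g)/hQ (2+c*c) Q).
Proof.
  intros Hc Hg H HQ Rc Rg RQ Rw Hgood.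
  pose proof (Yv_sq (2+c*c) Q w H HQ) as HY.
  set (Y := Yv Q w) in *.
  assert (RY : IsRat Y).
  { unfold Y, Yv. apply IsRat_div. apply IsRat_mult. apply IsRat_opp; auto.
    apply IsRat_minus; auto. apply (IsRat_IZR 1).
    apply IsRat_mult. apply IsRat_mult; auto. apply (IsRat_IZR 2).
    apply IsRat_plus; auto. apply (IsRat_IZR 1). }
  assert (R2 : IsRat 2) by apply (IsRat_IZR 2).
  assert (R1 : IsRat 1) by apply (IsRat_IZR 1).
  set (G1 := (c*Q*(Q-1) - w*(Q+1))/(2*Q*(Q+1))).
  set (G2 := (c*Q*(Q-1) + w*(Q+1))/(2*Q*(Q+1))).
  assert (RG1 : IsRat G1).
  { unfold G1. repeat first [apply IsRat_div | apply IsRat_mult | apply IsRat_minus | apply IsRat_plus]; auto. }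
  assert (RG2 : IsRat G2).
  { unfold G2. repeat first [apply IsRat_div | apply IsRat_mult | apply IsRat_minus | apply IsRat_plus]; auto. }
  pose proof (sq_id1 c Q w H HQ) as S1. fold Y G1 in S1.
  pose proof (sq_id2 c Q w H HQ) as S2. fold Y G2 in S2.
  unfold ext. fold Y.
  destruct (Rlt_dec (hQ (2+c*c) Q) (c*c/4)) as [Hlt|Hnlt].
  - split; [|left; replace (c/2 + Y - c/2) with Y by ring; exact HY].
    repeat split.
    + apply IsRat_plus; auto. apply IsRat_div; auto.
    + nra.
    + nra.
    + exists G1. split; auto.
    + exists G2. split; auto. rewrite <- S2. replace (c - (c/2+Y)) with (c/2 - Y) by field. reflexivity.
  - destruct Hgood as [Hg1|Hg2]; [contradiction|].
    assert (HYnz : Y <> 0).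
    { intros E. rewrite E in HY. assert (0 < (c/2+2/c)^2) by (apply pow_lt; apply Rplus_lt_0_compat; [lra|apply Rdiv_lt_0_compat; lra]). nra. }
    assert (Hsm : (g*g/Y)*(g*g/Y) < c*c/4).
    { assert (E1 : (g*g/Y)*(g*g/Y) = (g*g)*(g*g)/(Y*Y)) by (field; auto).
      rewrite E1. rewrite HY. apply lt_div_l.
      - assert (0 < (c/2+2/c)^2) by (apply pow_lt; apply Rplus_lt_0_compat; [lra|apply Rdiv_lt_0_compat; lra]). lra.
      - rewrite <- Hg. assert (E2 : (c * c / 4 + 1) * (c * c / 4 + 1) = c*c/4 * (c/2+2/c)^2) by (field; lra).
        rewrite E2. apply Rmult_lt_compat_l; [nra|lra]. }
    split.
    + repeat split.
      * apply IsRat_plus. apply IsRat_div; auto. apply IsRat_div; auto. apply IsRat_mult; auto.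
      * nra.
      * nra.
      * exists (g*G1/Y). split.
        { apply IsRat_div; auto. apply IsRat_mult; auto. }
        destruct (inv_id c g Y 1 G1 Hg HYnz) as [E|E].
        { rewrite <- S1. replace (1*Y) with Y by ring. reflexivity. }
        { rewrite <- E. replace (1 * (g*g)/Y) with (g*g/Y) by (field; auto). reflexivity. }
        { exfalso. apply E. ring. }
      * exists (g*G2/Y). split.
        { apply IsRat_div; auto. apply IsRat_mult; auto. }
        destruct (inv_id c g Y (-1) G2 Hg HYnz) as [E|E].
        { rewrite <- S2. replace (c/2 + -1*Y) with (c/2 - Y) by ring. reflexivity. }
        { rewrite <- E. replace (c/2 + -1 * (g*g)/Y) with (c - (c/2 + g*g/Y)) by (field; auto). reflexivity. }
        { exfalso. apply E. ring. }
    + right. rewrite <- HY. field. auto.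
Qed.

Fixpoint pt (A Q0 w0 : R) (n : nat) : R * R :=
  match n with
  | O => (Q0, w0)
  | S k => let (Q, w) := pt A Q0 w0 k in (dblQ A Q w, dblw A Q w)
  end.

Lemma Vv_four : Vv 4 2.
Proof. exists 1%Z, 1%Z. repeat split. simpl. field. Qed.

Lemma val_dbl A Q N : Vv Q (-2*N) -> (1 <= N)%Z -> Iv A 0 ->
  Vv ((Q*Q-1)^2/(4*F3 A Q)) (-2*N - 2).
Proof.
  intros HQ HN HA.
  assert (HQQ : Vv (Q*Q) (-4*N)) by (replace (-4*N)%Z with (-2*N + -2*N)%Z by lia; now apply Vv_mul).
  assert (H1 : Vv (Q*Q - 1) (-4*N)).
  { unfold Rminus. apply Vv_add_Iv with 0%Z; auto. apply (Iv_opp 1 0). apply (Iv_IZR 1). lia. }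
  assert (H2 : Vv ((Q*Q-1)^2) (-8*N)).
  { replace ((Q*Q-1)^2) with ((Q*Q-1)*(Q*Q-1)) by ring.
    replace (-8*N)%Z with (-4*N + -4*N)%Z by lia. now apply Vv_mul. }
  assert (H3 : Vv (Q*Q*Q) (-6*N)).
  { replace (-6*N)%Z with (-4*N + -2*N)%Z by lia. now apply Vv_mul. }
  assert (H4 : Iv (A*Q*Q) (-4*N)).
  { replace (A*Q*Q) with (A*(Q*Q)) by ring. replace (-4*N)%Z with (0 + -4*N)%Z by lia.
    apply Iv_mul; auto. now apply Vv_Iv. }
  assert (H5 : Vv (F3 A Q) (-6*N)).
  { unfold F3. apply Vv_add_Iv with (-2*N)%Z; [|now apply Vv_Iv|lia].
    apply Vv_add_Iv with (-4*N)%Z; auto. lia. }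
  assert (H6 : Vv (4 * F3 A Q) (2 + -6*N)) by (apply Vv_mul; auto; apply Vv_four).
  replace (-2*N - 2)%Z with (-8*N - (2 + -6*N))%Z by lia.
  now apply Vv_div.
Qed.

Lemma val_hQ A Q N : Vv Q (-2*N) -> (1 <= N)%Z -> Iv A 0 ->
  Vv (hQ A Q) (-2*N - 2).
Proof.
  intros HQ HN HA. unfold hQ.
  assert (HQQ : Vv (Q*Q) (-4*N)) by (replace (-4*N)%Z with (-2*N + -2*N)%Z by lia; now apply Vv_mul).
  assert (H1 : Vv (Q*Q + A*Q + 1) (-4*N)).
  { apply Vv_add_Iv with 0%Z; [|apply (Iv_IZR 1)|lia].
    apply Vv_add_Iv with (-2*N)%Z; auto; [|lia].
    replace (-2*N)%Z with (0 + -2*N)%Z by lia. apply Iv_mul; auto. now apply Vv_Iv. }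
  assert (Hm : Vv (Q - 1) (-2*N)).
  { unfold Rminus. apply Vv_add_Iv with 0%Z; auto. apply (Iv_opp 1 0). apply (Iv_IZR 1). lia. }
  assert (Hp : Vv (Q + 1) (-2*N)).
  { apply Vv_add_Iv with 0%Z; auto. apply (Iv_IZR 1). lia. }
  assert (H2 : Vv ((Q-1)*(Q-1)) (-4*N)) by (replace (-4*N)%Z with (-2*N + -2*N)%Z by lia; now apply Vv_mul).
  assert (H3 : Vv ((Q+1)*(Q+1)) (-4*N)) by (replace (-4*N)%Z with (-2*N + -2*N)%Z by lia; now apply Vv_mul).
  assert (H4 : Vv (4*Q*((Q+1)*(Q+1))) (2 + -2*N + -4*N)).
  { apply Vv_mul; [apply Vv_mul; [apply Vv_four|exact HQ]|exact H3]. }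
  assert (H5 : Vv ((Q*Q + A*Q + 1)*((Q-1)*(Q-1))) (-4*N + -4*N)) by (apply Vv_mul; auto).
  replace (-2*N - 2)%Z with ((-4*N + -4*N) - (2 + -2*N + -4*N))%Z by lia.
  now apply Vv_div.
Qed.

Lemma IsRat_dbl A Q w : IsRat A -> IsRat Q -> IsRat w -> IsRat (dblQ A Q w) /\ IsRat (dblw A Q w).
Proof.
  intros HA HQ Hw.
  assert (R2 : IsRat 2) by apply (IsRat_IZR 2).
  assert (R3 : IsRat 3) by apply (IsRat_IZR 3).
  assert (R1 : IsRat 1) by apply (IsRat_IZR 1).
  assert (Hl : IsRat (lam A Q w)).
  { unfold lam. repeat first [assumption | apply IsRat_div | apply IsRat_mult | apply IsRat_minus | apply IsRat_plus]; auto. }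
  assert (HdQ : IsRat (dblQ A Q w)).
  { unfold dblQ. repeat first [assumption | apply IsRat_mult | apply IsRat_minus | apply IsRat_plus]; auto. }
  split; auto. unfold dblw.
  repeat first [assumption | apply IsRat_mult | apply IsRat_minus | apply IsRat_plus]; auto.
Qed.

Lemma pt_inv c A Q0 w0 : A = 2 + c*c -> 2 <= c -> IsRat c -> Iv A 0 ->
  w0*w0 = F3 A Q0 -> 0 < Q0 -> IsRat Q0 -> IsRat w0 -> Vv Q0 (-4) ->
  forall n, let (Q, w) := pt A Q0 w0 n in
    w*w = F3 A Q /\ 0 < Q /\ IsRat Q /\ IsRat w /\ Vv Q (-2 * (Z.of_nat n + 2)).
Proof.
  intros HA Hc Rc IA H0 HQ0 RQ0 Rw0 V0 n.
  assert (RA : IsRat A) by (rewrite HA; apply IsRat_plus; [apply (IsRat_IZR 2)|apply IsRat_mult; auto]).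
  induction n as [|n IH].
  - simpl. repeat split; auto.
  - simpl. destruct (pt A Q0 w0 n) as [Q w]. destruct IH as (H & HQ & RQ & Rw & VQ).
    assert (HF : 0 < F3 A Q) by (unfold F3; rewrite HA; nra).
    assert (Hw : w <> 0) by (intro E; rewrite E in H; lra).
    pose proof (dblQ_eq A Q w H Hw) as EQ.
    pose proof (dbl_curve A Q w H Hw) as EC.
    destruct (IsRat_dbl A Q w RA RQ Rw) as [R1 R2].
    assert (VQ' : Vv (dblQ A Q w) (-2 * (Z.of_nat (S n) + 2))).
    { rewrite EQ. replace (-2 * (Z.of_nat (S n) + 2))%Z with (-2 * (Z.of_nat n + 2) - 2)%Z by lia.
      apply val_dbl; auto. lia. }
    repeat split; auto.
    assert (0 <= dblQ A Q w) by (rewrite EQ; apply Rle_mult_inv_pos; [apply pow2_ge_0|lra]).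
    pose proof (Vv_neq0 _ _ VQ'). lra.
Qed.

Definition gdec c Q : bool :=
  if Rlt_dec (hQ (2+c*c) Q) (c*c/4) then true
  else if Rlt_dec ((c/2+2/c)^2) (hQ (2+c*c) Q) then true else false.

Lemma gdec_true c Q : gdec c Q = true -> goodQ c Q.
Proof. unfold gdec, goodQ. destruct Rlt_dec; auto. destruct Rlt_dec; auto. discriminate. Qed.

Lemma gdec_false c Q : gdec c Q = false ->
  c*c/4 <= hQ (2+c*c) Q /\ hQ (2+c*c) Q <= (c/2+2/c)^2.
Proof. unfold gdec. destruct Rlt_dec; [discriminate|]. destruct Rlt_dec; [discriminate|]. lra. Qed.

Definition chooseX c g A Q0 w0 (k : nat) : R :=
  let (Q, w) := pt A Q0 w0 (2*k) in
  if gdec c Q then ext c g Q w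
  else let (Q', w') := pt A Q0 w0 (S (2*k)) in ext c g Q' w'.

Lemma one_point c g A j Q w : A = 2 + c*c -> 2 <= c -> c*c/4 + 1 = g*g ->
  IsRat c -> IsRat g -> Iv A 0 -> Vv (g*g) 0 ->
  w*w = F3 A Q /\ 0 < Q /\ IsRat Q /\ IsRat w /\ Vv Q (-2 * (Z.of_nat j + 2)) ->
  goodQ c Q ->
  exists e, (e = (-(2*Z.of_nat j + 6))%Z \/ e = (2*Z.of_nat j + 6)%Z) /\
    Vv ((ext c g Q w - c/2)*(ext c g Q w - c/2)) e /\ GoodX c (ext c g Q w).
Proof.
  intros HA Hc Hg Rc Rg IA VK (H & HQ & RQ & Rw & VQ) Hgood.
  subst A.
  destruct (ext_spec c g Q w Hc Hg H HQ Rc Rg RQ Rw Hgood) as [HG [E|E]].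
  - exists (-(2*Z.of_nat j + 6))%Z. split; [left; auto|]. split; auto.
    rewrite E. replace (-(2*Z.of_nat j + 6))%Z with (-2*(Z.of_nat j + 2) - 2)%Z by lia.
    apply val_hQ; auto. lia.
  - exists (2*Z.of_nat j + 6)%Z. split; [right; auto|]. split; auto.
    rewrite E. replace (2*Z.of_nat j + 6)%Z with ((0 + 0) - (-2*(Z.of_nat j + 2) - 2))%Z by lia.
    apply Vv_div. apply Vv_mul; auto. apply val_hQ; auto. lia.
Qed.

Lemma chooseX_spec c g A Q0 w0 : A = 2 + c*c -> 2 <= c -> c*c/4 + 1 = g*g ->
  IsRat c -> IsRat g -> Iv A 0 -> Vv (g*g) 0 ->
  w0*w0 = F3 A Q0 -> 0 < Q0 -> IsRat Q0 -> IsRat w0 -> Vv Q0 (-4) ->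
  forall k, exists j e, (j = 2*k \/ j = S (2*k))%nat /\
    (e = (-(2*Z.of_nat j + 6))%Z \/ e = (2*Z.of_nat j + 6)%Z) /\
    Vv ((chooseX c g A Q0 w0 k - c/2)*(chooseX c g A Q0 w0 k - c/2)) e /\
    GoodX c (chooseX c g A Q0 w0 k).
Proof.
  intros HA Hc Hg Rc Rg IA VK H0 HQ0 RQ0 Rw0 V0 k.
  pose proof (pt_inv c A Q0 w0 HA Hc Rc IA H0 HQ0 RQ0 Rw0 V0) as PI.
  unfold chooseX.
  pose proof (PI (2*k)%nat) as P1. pose proof (PI (S (2*k))) as P2.
  destruct (pt A Q0 w0 (2*k)) as [Q w] eqn:E1.
  destruct (gdec c Q) eqn:Eg.
  - destruct (one_point c g A (2*k) Q w HA Hc Hg Rc Rg IA VK P1 (gdec_true c Q Eg)) as (e & He & Hv & HG).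
    exists (2*k)%nat, e. auto.
  - destruct (pt A Q0 w0 (S (2*k))) as [Q' w'] eqn:E2.
    assert (E3 : pt A Q0 w0 (S (2*k)) = (dblQ A Q w, dblw A Q w)) by (simpl pt at 1; fold (2*k)%nat; rewrite E1; reflexivity).
    rewrite E3 in E2. injection E2 as EQ' Ew'.
    destruct (gdec_false c Q Eg) as [L1 L2].
    destruct P1 as (H & HQ & RQ & Rw & VQ).
    assert (Hw : w <> 0) by (intro E; rewrite E in H; unfold F3 in H; subst A; nra).
    assert (Hgood : goodQ c Q').
    { left. rewrite <- EQ'. subst A. rewrite dblQ_eq; auto. apply real_step; auto. }
    destruct (one_point c g A (S (2*k)) Q' w' HA Hc Hg Rc Rg IA VK P2 Hgood) as (e & He & Hv & HG).
    exists (S (2*k)), e. auto.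
Qed.

Lemma chooseX_inj c g A Q0 w0 : A = 2 + c*c -> 2 <= c -> c*c/4 + 1 = g*g ->
  IsRat c -> IsRat g -> Iv A 0 -> Vv (g*g) 0 ->
  w0*w0 = F3 A Q0 -> 0 < Q0 -> IsRat Q0 -> IsRat w0 -> Vv Q0 (-4) ->
  forall k1 k2, chooseX c g A Q0 w0 k1 = chooseX c g A Q0 w0 k2 -> k1 = k2.
Proof.
  intros HA Hc Hg Rc Rg IA VK H0 HQ0 RQ0 Rw0 V0 k1 k2 E.
  destruct (chooseX_spec c g A Q0 w0 HA Hc Hg Rc Rg IA VK H0 HQ0 RQ0 Rw0 V0 k1) as (j1 & e1 & Hj1 & He1 & V1 & _).
  destruct (chooseX_spec c g A Q0 w0 HA Hc Hg Rc Rg IA VK H0 HQ0 RQ0 Rw0 V0 k2) as (j2 & e2 & Hj2 & He2 & V2 & _).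
  rewrite E in V1. pose proof (Vv_unique _ _ _ V1 V2) as Ee.
  assert (j1 = j2) by (destruct He1, He2; lia).
  lia.
Qed.

Lemma odd_sumsq a b : Z.odd a = true -> Z.odd b = true ->
  exists o, Z.odd o = true /\ (a*a + b*b = 2*o)%Z.
Proof.
  intros Ha Hb. apply Z.odd_spec in Ha. apply Z.odd_spec in Hb.
  destruct Ha as [x ->]. destruct Hb as [y ->].
  exists (2*(x*x + x + y*y + y) + 1)%Z. split; [|ring].
  apply Z.odd_spec. exists (x*x + x + y*y + y)%Z. ring.
Qed.

Ltac israt := repeat first [assumption | apply IsRat_IZR | apply IsRat_div | apply IsRat_mult
  | apply IsRat_plus | apply IsRat_minus | apply IsRat_opp | apply IsRat_inv].

Ltac zodd Hj Hq :=
  repeat (rewrite ?Z.odd_add, ?Z.odd_sub, ?Z.odd_mul, ?Hj, ?Hq); reflexivity.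

Lemma params (j q : Z) : Z.odd j = true -> Z.odd q = true ->
  2 <= IZR ((8*j - q)*q) / IZR (q*q - 16*j*j) - / (IZR ((8*j - q)*q) / IZR (q*q - 16*j*j)) ->
  exists g A Q0 w0,
    A = 2 + (IZR ((8*j - q)*q) / IZR (q*q - 16*j*j) - / (IZR ((8*j - q)*q) / IZR (q*q - 16*j*j)))
          * (IZR ((8*j - q)*q) / IZR (q*q - 16*j*j) - / (IZR ((8*j - q)*q) / IZR (q*q - 16*j*j))) /\
    let c := IZR ((8*j - q)*q) / IZR (q*q - 16*j*j) - / (IZR ((8*j - q)*q) / IZR (q*q - 16*j*j)) in
    c*c/4 + 1 = g*g /\ IsRat c /\ IsRat g /\ Iv A 0 /\ Vv (g*g) 0 /\
    w0*w0 = F3 A Q0 /\ 0 < Q0 /\ IsRat Q0 /\ IsRat w0 /\ Vv Q0 (-4).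
Proof.
  intros Hj Hq.
  set (a0 := ((8*j - q)*q)%Z). set (b0 := (q*q - 16*j*j)%Z).
  set (r0 := (16*j*j - 4*j*q + q*q)%Z).
  assert (Oa : Z.odd a0 = true) by (unfold a0; zodd Hj Hq).
  assert (Ob : Z.odd b0 = true) by (unfold b0; zodd Hj Hq).
  assert (Or : Z.odd r0 = true) by (unfold r0; zodd Hj Hq).
  assert (Oj2 : Z.odd (j*j*(q-2*j)*(q-2*j)) = true) by zodd Hj Hq.
  assert (Ir : (r0*r0 = a0*a0 + a0*b0 + b0*b0)%Z) by (unfold r0, a0, b0; ring).
  assert (Iab : (a0 + b0 = 8*j*(q-2*j))%Z) by (unfold a0, b0; ring).
  pose proof (odd_neq0 _ Oa) as Na. pose proof (odd_neq0 _ Ob) as Nb.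
  pose proof (odd_neq0 _ Or) as Nr. pose proof (odd_neq0 _ Oj2) as Nj.
  set (tau := IZR a0 / IZR b0).
  set (c := tau - / tau).
  intros Hc.
  assert (Ntau : tau <> 0) by (unfold tau; unfold Rdiv; apply Rmult_integral_contrapositive_currified; auto; now apply Rinv_neq_0_compat).
  set (r := IZR r0 / IZR b0).
  assert (Hr : r*r = tau*tau + tau + 1).
  { unfold r, tau. apply (f_equal IZR) in Ir. rewrite !plus_IZR, !mult_IZR in Ir.
    assert (E : IZR r0 / IZR b0 * (IZR r0 / IZR b0) - (IZR a0 / IZR b0 * (IZR a0 / IZR b0) + IZR a0 / IZR b0 + 1)
      = (IZR r0 * IZR r0 - (IZR a0 * IZR a0 + IZR a0 * IZR b0 + IZR b0 * IZR b0)) / (IZR b0 * IZR b0)) by (field; auto).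
    rewrite Ir in E. replace ((IZR a0 * IZR a0 + IZR a0 * IZR b0 + IZR b0 * IZR b0 -
       (IZR a0 * IZR a0 + IZR a0 * IZR b0 + IZR b0 * IZR b0)) / (IZR b0 * IZR b0)) with 0 in E by (field; auto).
    lra. }
  assert (Nr' : r <> 0) by (unfold r; unfold Rdiv; apply Rmult_integral_contrapositive_currified; auto; now apply Rinv_neq_0_compat).
  assert (Ntau1 : tau - 1 <> 0).
  { intro E. assert (tau = 1) by lra. unfold c in Hc. rewrite H in Hc. lra. }
  assert (Ntau2 : tau + 1 <> 0).
  { unfold tau. intro E. apply (f_equal (fun x => x * IZR b0)) in E.
    replace ((IZR a0 / IZR b0 + 1) * IZR b0) with (IZR (a0 + b0)) in E by (rewrite plus_IZR; field; auto).
    rewrite Iab in E. rewrite Rmult_0_l in E. apply eq_IZR_R0 in E.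
    apply Z.odd_spec in Hj. apply Z.odd_spec in Hq. destruct Hj as [x Hx]. destruct Hq as [y Hy]. lia. }
  set (g := (tau*tau + 1)/(2*tau)).
  set (A := 2 + c*c).
  assert (RZ : forall z, IsRat (IZR z)) by apply IsRat_IZR.
  assert (Rtau : IsRat tau) by (unfold tau; apply IsRat_div; auto).
  assert (Rr : IsRat r) by (unfold r; apply IsRat_div; auto).
  assert (Rc : IsRat c) by (unfold c; apply IsRat_minus; auto; apply IsRat_inv; auto).
  assert (Rg : IsRat g).
  { unfold g. israt. }
  assert (RA : IsRat A) by (unfold A; israt).
  set (Q0 := - tau). set (w0 := (tau - 1)*r).
  assert (HP : w0*w0 = F3 A Q0).
  { unfold w0, Q0, A, c, F3.
    replace ((tau - 1) * r * ((tau - 1) * r)) with ((tau-1)*(tau-1)*(r*r)) by ring.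
    rewrite Hr. field. auto. }
  assert (Nw0 : w0 <> 0) by (unfold w0; apply Rmult_integral_contrapositive_currified; auto).
  set (Q2 := dblQ A Q0 w0).
  assert (EQ2 : Q2 = (tau+1)*(tau+1)/(4*(r*r))).
  { unfold Q2. rewrite dblQ_eq; auto. rewrite <- HP. unfold Q0, w0.
    field. repeat split; auto. }
  assert (NQ2 : Q2 <> 0).
  { rewrite EQ2. unfold Rdiv. apply Rmult_integral_contrapositive_currified.
    apply Rmult_integral_contrapositive_currified; auto.
    apply Rinv_neq_0_compat. apply Rmult_integral_contrapositive_currified; [lra|].
    apply Rmult_integral_contrapositive_currified; auto. }
  pose proof (dbl_curve A Q0 w0 HP Nw0) as HP2. fold Q2 in HP2.
  set (w2 := dblw A Q0 w0) in *.
  pose proof (tr_curve A Q2 w2 HP2 NQ2) as HPb.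
  exists g, A, (/Q2), (-w2/(Q2*Q2)).
  split; [reflexivity|]. fold c.
  assert (EQb : / Q2 = IZR (r0*r0) / IZR (j*j*(q-2*j)*(q-2*j)) * powerRZ 2 (-4)).
  { rewrite EQ2. unfold r, tau.
    assert (Eb : IZR a0 = IZR (8*j*(q-2*j)) - IZR b0) by (rewrite <- Iab; rewrite plus_IZR; ring).
    rewrite Eb. rewrite !mult_IZR, !minus_IZR.
    replace (powerRZ 2 (-4)) with (/16) by (simpl; field).
    rewrite !mult_IZR, !minus_IZR in Nj.
    assert (Nqj : IZR (q - 2*j) <> 0) by (apply odd_neq0; zodd Hj Hq).
    assert (Njj : IZR j <> 0) by (apply odd_neq0; exact Hj).
    rewrite minus_IZR in Nqj.
    field. repeat split; auto.
    replace (8 * IZR j * (IZR q - IZR (2 * j)) - IZR b0 + IZR b0) with (8 * IZR j * (IZR q - IZR (2 * j))) by ring.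
    repeat (apply Rmult_integral_contrapositive_currified); auto; lra. }
  repeat split.
  - unfold g, c. field. auto.
  - exact Rc.
  - exact Rg.
  -
    assert (Ec : c = IZR (a0*a0 - b0*b0) / IZR (a0*b0) * powerRZ 2 0).
    { unfold c, tau. rewrite minus_IZR, !mult_IZR. simpl powerRZ. field. auto. }
    assert (Ic : Iv c 0) by (exists (a0*a0 - b0*b0)%Z, (a0*b0)%Z; split; auto; apply Zodd_mul_true; auto).
    unfold A. apply Iv_add. apply (Iv_IZR 2). replace 0%Z with (0+0)%Z by reflexivity. now apply Iv_mul.
  -
    destruct (odd_sumsq a0 b0 Oa Ob) as (o & Oo & Eo).
    assert (Vg : Vv g 0).
    { exists o, (a0*b0)%Z. repeat split; auto. apply Zodd_mul_true; auto.
      unfold g, tau. apply (f_equal IZR) in Eo. rewrite plus_IZR, !mult_IZR in Eo.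
      rewrite mult_IZR. simpl powerRZ.
      replace (IZR o) with ((IZR a0 * IZR a0 + IZR b0 * IZR b0)/2) by lra.
      field. auto. }
    replace 0%Z with (0+0)%Z by reflexivity. now apply Vv_mul.
  - exact HPb.
  - apply Rinv_0_lt_compat. rewrite EQ2. apply Rdiv_lt_0_compat.
    + assert (0 < (tau+1)*(tau+1)). { apply Rsqr_pos_lt. exact Ntau2. } lra.
    + assert (0 < r*r) by (apply Rsqr_pos_lt; exact Nr'). lra.
  - apply IsRat_inv. rewrite EQ2. apply IsRat_div. apply IsRat_mult; apply IsRat_plus; auto; apply (RZ 1%Z).
    apply IsRat_mult; [apply (RZ 4%Z)|apply IsRat_mult; auto].
  - assert (R0 : IsRat Q0) by (unfold Q0; apply IsRat_opp; auto).
    assert (R0' : IsRat w0) by (unfold w0; apply IsRat_mult; auto; apply IsRat_minus; auto; apply (RZ 1%Z)).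
    destruct (IsRat_dbl A Q0 w0 RA R0 R0') as [RQ2 Rw2]. fold Q2 in RQ2. fold w2 in Rw2.
    apply IsRat_div. now apply IsRat_opp. now apply IsRat_mult.
  - rewrite EQb. exists (r0*r0)%Z, (j * j * (q - 2 * j) * (q - 2 * j))%Z. repeat split; auto. apply Zodd_mul_true; auto.
Qed.

Lemma inj_infinite (P : R*R -> Prop) (g : nat -> R*R) :
  (forall n, P (g n)) -> (forall n m, g n = g m -> n = m) -> infinite_set P.
Proof.
  intros HP Hinj l.
  apply NNPP. intro Hno.
  assert (Hall : forall p, P p -> In p l).
  { intros p Hp. apply NNPP. intro Hn. apply Hno. exists p. auto. }
  set (L := map g (seq 0 (S (length l)))).
  assert (ND : NoDup L).
  { apply NoDup_map_NoDup_ForallPairs; [|apply seq_NoDup].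
    intros x y _ _ E. now apply Hinj. }
  assert (Inc : incl L l).
  { intros p Hp. unfold L in Hp. apply in_map_iff in Hp. destruct Hp as [n [<- _]]. apply Hall, HP. }
  pose proof (NoDup_incl_length ND Inc) as Hlen.
  unfold L in Hlen. rewrite length_map, length_seq in Hlen. lia.
Qed.

Lemma IsRat_sqrt_sq x y : IsRat y -> x = y^2 -> IsRat (sqrt x).
Proof. intros Hy ->. rewrite <- Rsqr_pow2. rewrite sqrt_Rsqr_abs. now apply IsRat_Rabs. Qed.

Lemma good_horiz c X : 0 < c -> IsRat c -> GoodX c X -> good_point (c/2) (X/2, 1/2).
Proof.
  intros Hc Rc (RX & [H0 H1] & [G1 [RG1 E1]] & [G2 [RG2 E2]]).
  unfold good_point, dist2. simpl.
  assert (R2 : IsRat 2) by apply (IsRat_IZR 2).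
  assert (R1 : IsRat 1) by apply (IsRat_IZR 1).
  repeat split.
  - now apply IsRat_div.
  - now apply IsRat_div.
  - lra.
  - lra.
  - lra.
  - lra.
  - apply IsRat_sqrt_sq with (G1/2). now apply IsRat_div.
    replace ((G1/2)^2) with ((X^2+1)/4) by (rewrite E1; field). field.
  - apply IsRat_sqrt_sq with (G1/2). now apply IsRat_div.
    replace ((G1/2)^2) with ((X^2+1)/4) by (rewrite E1; field). field.
  - apply IsRat_sqrt_sq with (G2/2). now apply IsRat_div.
    replace ((G2/2)^2) with (((c-X)^2+1)/4) by (rewrite E2; field). field.
  - apply IsRat_sqrt_sq with (G2/2). now apply IsRat_div.
    replace ((G2/2)^2) with (((c-X)^2+1)/4) by (rewrite E2; field). field.
Qed.

Lemma good_vert c X : 0 < c -> IsRat c -> GoodX c X -> good_point (2/c) (1/c, X/c).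
Proof.
  intros Hc Rc (RX & [H0 H1] & [G1 [RG1 E1]] & [G2 [RG2 E2]]).
  unfold good_point, dist2. simpl.
  assert (R2 : IsRat 2) by apply (IsRat_IZR 2).
  assert (R1 : IsRat 1) by apply (IsRat_IZR 1).
  assert (Hc' : c <> 0) by lra.
  repeat split.
  - now apply IsRat_div.
  - now apply IsRat_div.
  - apply Rdiv_lt_0_compat; lra.
  - apply lt_div_l; [lra|]. field_simplify; lra.
  - apply Rdiv_lt_0_compat; lra.
  - apply lt_div_l; lra.
  - apply IsRat_sqrt_sq with (G1/c). now apply IsRat_div.
    replace ((G1/c)^2) with ((X^2+1)/c^2) by (rewrite E1; field; auto). field; auto.
  - apply IsRat_sqrt_sq with (G2/c). now apply IsRat_div.
    replace ((G2/c)^2) with (((c-X)^2+1)/c^2) by (rewrite E2; field; auto). field; auto.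
  - apply IsRat_sqrt_sq with (G1/c). now apply IsRat_div.
    replace ((G1/c)^2) with ((X^2+1)/c^2) by (rewrite E1; field; auto). field; auto.
  - apply IsRat_sqrt_sq with (G2/c). now apply IsRat_div.
    replace ((G2/c)^2) with (((c-X)^2+1)/c^2) by (rewrite E2; field; auto). field; auto.
Qed.

Definition cjq (j q : Z) : R :=
  IZR ((8*j - q)*q) / IZR (q*q - 16*j*j) - / (IZR ((8*j - q)*q) / IZR (q*q - 16*j*j)).

Lemma core_seq j q : Z.odd j = true -> Z.odd q = true -> 2 <= cjq j q ->
  IsRat (cjq j q) /\ exists X : nat -> R, (forall n m, X n = X m -> n = m) /\ forall n, GoodX (cjq j q) (X n).
Proof.
  intros Hj Hq Hc.
  destruct (params j q Hj Hq Hc) as (g & A & Q0 & w0 & HA & Hg & Rc & Rg & IA & VK & H0 & HQ0 & RQ0 & Rw0 & V0).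
  fold (cjq j q) in *.
  split; auto.
  exists (chooseX (cjq j q) g A Q0 w0). split.
  - apply (chooseX_inj (cjq j q) g A Q0 w0); auto.
  - intros k. destruct (chooseX_spec (cjq j q) g A Q0 w0 HA Hc Hg Rc Rg IA VK H0 HQ0 RQ0 Rw0 V0 k)
      as (jj & e & _ & _ & _ & HG). exact HG.
Qed.

Definition taum (m : R) := (2*m - 1)/(1 - m*m).
Definition cm (m : R) := taum m - / taum m.

Lemma cjq_cm j q : Z.odd j = true -> Z.odd q = true -> cjq j q = cm (IZR (4*j) / IZR q).
Proof.
  intros Hj Hq.
  assert (Nq : IZR q <> 0) by (now apply odd_neq0).
  assert (Nb : IZR (q*q - 16*j*j) <> 0) by (apply odd_neq0; zodd Hj Hq).
  assert (E : taum (IZR (4*j) / IZR q) = IZR ((8*j - q)*q) / IZR (q*q - 16*j*j)).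
  { unfold taum. rewrite !mult_IZR, !minus_IZR, !mult_IZR in *.
    assert (Nb' : IZR q * IZR q - IZR 16 * IZR j * IZR j <> 0) by exact Nb.
    field. split; auto. }
  unfold cjq, cm. now rewrite E.
Qed.

Lemma taum_pos m : 1/2 < m < 1 -> 0 < taum m.
Proof. intros [H1 H2]. unfold taum. apply Rdiv_lt_0_compat; nra. Qed.

Lemma cm_mono m1 m2 : 1/2 < m1 -> m1 < m2 -> m2 < 1 -> cm m1 < cm m2.
Proof.
  intros H1 H12 H2.
  assert (T1 : 0 < taum m1) by (apply taum_pos; lra).
  assert (T2 : 0 < taum m2) by (apply taum_pos; lra).
  assert (Tlt : taum m1 < taum m2).
  { unfold taum.
    assert (P1 : 0 < 1 - m1*m1) by nra. assert (P2 : 0 < 1 - m2*m2) by nra.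
    assert (E : (2*m2 - 1)/(1 - m2*m2) - (2*m1 - 1)/(1 - m1*m1)
      = (m2-m1)*(2 - m1 - m2 + 2*m1*m2)/((1-m1*m1)*(1-m2*m2))) by (field; split; lra).
    assert (0 < (m2-m1)*(2 - m1 - m2 + 2*m1*m2)/((1-m1*m1)*(1-m2*m2))).
    { apply Rdiv_lt_0_compat; [|nra]. apply Rmult_lt_0_compat; nra. }
    lra. }
  unfold cm.
  assert (/ taum m2 < / taum m1) by (apply Rinv_lt_contravar; nra).
  lra.
Qed.

Definition Mx (x : R) :=
  let T := (x + sqrt (x*x + 4))/2 in (sqrt (T*T + T + 1) - 1)/T.

Lemma Mx_spec x : 0 < x -> 1/2 < Mx x < 1 /\ cm (Mx x) = x.
Proof.
  intros Hx. unfold Mx.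
  set (s := sqrt (x*x+4)).
  assert (Hs2 : s*s = x*x+4) by (apply sqrt_sqrt; nra).
  assert (Hs0 : 0 <= s) by apply sqrt_pos.
  assert (Hsx : x < s) by nra.
  set (T := (x + s)/2).
  assert (HT : 0 < T) by (unfold T; lra).
  assert (HTi : / T = (s - x)/2).
  { unfold T. apply Rmult_eq_reg_l with ((x+s)/2); [|lra]. rewrite Rinv_r by lra. field_simplify. nra. }
  set (R0 := sqrt (T*T + T + 1)).
  assert (HR2 : R0*R0 = T*T + T + 1) by (apply sqrt_sqrt; nra).
  assert (HR0 : 0 <= R0) by apply sqrt_pos.
  assert (HRT : T + 2 < 2*R0) by nra.
  assert (HRT1 : R0 < T + 1) by nra.
  set (M := (R0 - 1)/T).
  assert (HM1 : 1/2 < M) by (unfold M; apply lt_div_r; lra).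
  assert (HM2 : M < 1) by (unfold M; apply lt_div_l; lra).
  split; [lra|].
  assert (Htau : taum M = T).
  { unfold taum.
    assert (E1 : 1 - M*M = (2*R0 - T - 2)/(T*T)).
    { unfold M. apply Rminus_diag_uniq.
      replace (1 - (R0 - 1) / T * ((R0 - 1) / T) - (2 * R0 - T - 2) / (T * T)) with ((T*T + T + 1 - R0*R0)/(T*T)) by (field; lra).
      rewrite HR2. field; lra. }
    rewrite E1. unfold M. field. split; lra. }
  unfold cm. rewrite Htau, HTi. unfold T. field.
Qed.

Lemma dense_4jq (al be : R) : al < be ->
  exists j q : Z, Z.odd j = true /\ Z.odd q = true /\ al < IZR (4*j) / IZR q < be.
Proof.
  intros Hab.
  destruct (INR_unbounded (8/(be - al))) as [n Hn].
  set (q := Z.of_nat (2*n+1)).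
  assert (Hq : IZR q = 2 * INR n + 1).
  { unfold q. rewrite <- INR_IZR_INZ. rewrite plus_INR, mult_INR. simpl. ring. }
  assert (Hq0 : 0 < IZR q) by (rewrite Hq; pose proof (pos_INR n); lra).
  assert (Oq : Z.odd q = true).
  { unfold q. apply Z.odd_spec. exists (Z.of_nat n). lia. }
  assert (Hsmall : 8 / IZR q < be - al).
  { apply lt_div_l; [lra|].
    assert (8/(be-al) < IZR q) by (rewrite Hq; pose proof (pos_INR n); lra).
    assert (8 = 8/(be-al) * (be - al)) by (field; lra).
    nra. }
  destruct (archimed (al * IZR q / 4)) as [Hk1 Hk2].
  set (k := up (al * IZR q / 4)) in *.
  set (j := if Z.odd k then k else (k+1)%Z).
  assert (Oj : Z.odd j = true).
  { unfold j. destruct (Z.odd k) eqn:E; auto. rewrite Z.odd_add, E. reflexivity. }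
  assert (Hj1 : IZR k <= IZR j <= IZR k + 1).
  { unfold j. destruct (Z.odd k); [lra|]. rewrite plus_IZR. lra. }
  exists j, q. repeat split; auto.
  - rewrite mult_IZR. apply lt_div_r; [lra|].
    assert (al * IZR q < 4 * IZR k).
    { apply Rmult_lt_reg_r with (/4); [lra|]. replace (4 * IZR k * / 4) with (IZR k) by field.
      unfold Rdiv in Hk1. lra. }
    lra.
  - rewrite mult_IZR. apply lt_div_l; [lra|].
    assert (4 * IZR k <= al * IZR q + 4).
    { assert (IZR k <= al * IZR q / 4 + 1) by lra.
      assert (al * IZR q / 4 * 4 = al * IZR q) by field. nra. }
    assert (8 < (be - al) * IZR q).
    { apply Rmult_lt_reg_r with (/ IZR q). apply Rinv_0_lt_compat; lra.
      replace ((be - al) * IZR q * / IZR q) with (be - al) by (field; lra).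
      exact Hsmall. }
    nra.
Qed.

Lemma dense_c (L U : R) : 2 <= L -> L < U ->
  exists j q, Z.odd j = true /\ Z.odd q = true /\ L < cjq j q < U.
Proof.
  intros HL HLU.
  destruct (Mx_spec L ltac:(lra)) as [[ML1 ML2] EL].
  destruct (Mx_spec U ltac:(lra)) as [[MU1 MU2] EU].
  assert (HM : Mx L < Mx U).
  { destruct (Rlt_or_le (Mx L) (Mx U)) as [H|H]; auto.
    destruct H as [H|H].
    - pose proof (cm_mono _ _ MU1 H ML2). lra.
    - rewrite H in EU. lra. }
  destruct (dense_4jq _ _ HM) as (j & q & Oj & Oq & [H1 H2]).
  exists j, q. repeat split; auto; rewrite cjq_cm by auto.
  - rewrite <- EL at 1. apply cm_mono; lra.
  - rewrite <- EU. apply cm_mono; lra.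
Qed.

Theorem theorem2p3 :
  forall u v : R, 0 <= u -> u < v -> exists a : R, S_good a /\ u < a < v.
Proof.
  intros u v Hu Huv.
  destruct (Rlt_or_le 1 v) as [Hv|Hv].
  - (* horizontal midline, a = c/2 >= 1 *)
    destruct (dense_c (2 * Rmax u 1) (2*v)) as (j & q & Oj & Oq & [H1 H2]).
    { pose proof (Rmax_r u 1). lra. }
    { assert (Rmax u 1 < v) by (apply Rmax_lub_lt; lra). lra. }
    set (c := cjq j q) in *.
    assert (Hc : 2 <= c) by (pose proof (Rmax_r u 1); lra).
    destruct (core_seq j q Oj Oq Hc) as [Rc [X [Xinj XG]]]. fold c in Rc, Xinj, XG.
    exists (c/2). split.
    + repeat split.
      * apply IsRat_div; auto. apply (IsRat_IZR 2).
      * lra.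
      * apply (inj_infinite _ (fun n => (X n / 2, 1/2))).
        { intros n. apply good_horiz; auto. lra. }
        { intros n m E. injection E as E. apply Xinj. lra. }
    + pose proof (Rmax_l u 1). lra.
  - (* vertical midline, a = 2/c <= 1 *)
    assert (Hv0 : 0 < v) by lra.
    destruct (dense_c (2/v) (4/(u+v))) as (j & q & Oj & Oq & [H1 H2]).
    { assert (2 <= 2/v).
      { apply Rmult_le_reg_r with v; [lra|]. replace (2/v*v) with 2 by (field; lra). nra. } lra. }
    { apply lt_div_l; [lra|]. replace (4 / (u + v) * v) with (4*v/(u+v)) by (field; lra).
      apply lt_div_r; lra. }
    set (c := cjq j q) in *.
    assert (H2v : 2 <= 2/v).
    { apply Rmult_le_reg_r with v; [lra|]. replace (2/v*v) with 2 by (field; lra). nra. }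
    assert (Hc : 2 <= c) by lra.
    destruct (core_seq j q Oj Oq Hc) as [Rc [X [Xinj XG]]]. fold c in Rc, Xinj, XG.
    exists (2/c). split.
    + repeat split.
      * apply IsRat_div; auto. apply (IsRat_IZR 2).
      * apply Rdiv_lt_0_compat; lra.
      * apply (inj_infinite _ (fun n => (1/c, X n / c))).
        { intros n. apply good_vert; auto. lra. }
        { intros n m E. injection E as E. apply Xinj.
          apply Rmult_eq_reg_r with (/c). exact E. apply Rinv_neq_0_compat. lra. }
    + split.
      * apply lt_div_r; [lra|].
        assert (u * c < (u+v)/2 * c).
        { apply Rmult_lt_compat_r; lra. }
        assert ((u+v)/2 * c < 2).
        { assert (E : (u+v)/2 * (4/(u+v)) = 2) by (field; lra).
          assert ((u+v)/2*c < (u+v)/2*(4/(u+v))) by (apply Rmult_lt_compat_l; lra). lra. }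
        lra.
      * apply lt_div_l; [lra|].
        assert (2 < v * c).
        { apply Rmult_lt_reg_r with (/v). apply Rinv_0_lt_compat; lra.
          replace (v * c * / v) with c by (field; lra). replace (2 * / v) with (2/v) by reflexivity. lra. }
        lra.
Qed.
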